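(* Consider the ODE system $$\frac{du}{dt}=a_1u-b_1u^2-c_1uv,\qquad \frac{dv}{dt}=\frac{a_2v}{1+ku}-b_2v^2-c_2uv,$$ with positive parameters $a_2,b_1,b_2,c_1,c_2$, $k\ge0$, and regard $a_1>0$ as the bifurcation parameter. Let $E_3=(0,\frac{a_2}{b_2})$. If $c_1\neq\frac{b_1b_2}{ka_2+c_2}$, then the system undergoes a transcritical bifurcation around $E_3$ at $$a_1=a_1^*=\frac{c_1a_2}{b_2}.$$ *)

(* Defs.v *)
From Stdlib Require Import Reals Lra.
From Coquelicot Require Import Coquelicot.
Open Scope R_scope.

Definition has_partials (f g : R -> R -> R -> R) (m u v : R) : Prop :=
  ex_derive (fun x => f m x v) u /\ ex_derive (fun y => f m u y) v /\
  ex_derive (fun x => g m x v) u /\ ex_derive (fun y => g m u y) v.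

Definition jac_det (f g : R -> R -> R -> R) (m u v : R) : R :=
  Derive (fun x => f m x v) u * Derive (fun y => g m u y) v
  - Derive (fun y => f m u y) v * Derive (fun x => g m x v) u.

Definition jac_tr (f g : R -> R -> R -> R) (m u v : R) : R :=
  Derive (fun x => f m x v) u + Derive (fun y => g m u y) v.

Definition in_box (u0 v0 r : R) (p : R * R) : Prop :=
  Rabs (fst p - u0) < r /\ Rabs (snd p - v0) < r.

(* Transcritical bifurcation of the family at the equilibrium (u0,v0) for
   the parameter value m0:
   - (u0,v0) is an equilibrium at m0 which is non-hyperbolic with a simple
     zero eigenvalue (det J = 0, tr J <> 0);
   - near (m0,(u0,v0)) the equilibrium set consists exactly of two distinct
     continuous branches b1, b2 of equilibria, both passing through (u0,v0)
     at m = m0 and existing on both sides of m0;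
   - exchange of stability: the critical eigenvalue changes sign along each
     branch as m crosses m0 (det J changes sign along b1), and for m <> m0
     the two branches have opposite stability type (det J of opposite signs). *)
Definition transcritical_bifurcation (f g : R -> R -> R -> R) (m0 u0 v0 : R) : Prop :=
  f m0 u0 v0 = 0 /\ g m0 u0 v0 = 0 /\
  jac_det f g m0 u0 v0 = 0 /\ jac_tr f g m0 u0 v0 <> 0 /\
  exists (d r : R) (b1 b2 : R -> R * R),
    0 < d /\ 0 < r /\
    b1 m0 = (u0, v0) /\ b2 m0 = (u0, v0) /\
    (forall m u v, Rabs (m - m0) < d -> in_box u0 v0 r (u, v) ->
        has_partials f g m u v) /\
    (forall m, Rabs (m - m0) < d ->
        continuous (fun t => fst (b1 t)) m /\ continuous (fun t => snd (b1 t)) m /\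
        continuous (fun t => fst (b2 t)) m /\ continuous (fun t => snd (b2 t)) m) /\
    (forall m, Rabs (m - m0) < d ->
        in_box u0 v0 r (b1 m) /\ in_box u0 v0 r (b2 m) /\
        (forall u v, in_box u0 v0 r (u, v) ->
           (f m u v = 0 /\ g m u v = 0 <-> (u, v) = b1 m \/ (u, v) = b2 m))) /\
    (forall m, Rabs (m - m0) < d -> m <> m0 -> b1 m <> b2 m) /\
    (forall m, Rabs (m - m0) < d -> m <> m0 ->
        jac_det f g m (fst (b1 m)) (snd (b1 m)) *
        jac_det f g m (fst (b2 m)) (snd (b2 m)) < 0) /\
    (forall m m', m0 - d < m < m0 -> m0 < m' < m0 + d ->
        jac_det f g m (fst (b1 m)) (snd (b1 m)) *
        jac_det f g m' (fst (b1 m')) (snd (b1 m')) < 0).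

Definition model_f (b1 c1 : R) (a1 u v : R) : R :=
  a1 * u - b1 * u ^ 2 - c1 * u * v.
Definition model_g (a2 b2 c2 k : R) (a1 u v : R) : R :=
  a2 * v / (1 + k * u) - b2 * v ^ 2 - c2 * u * v.

(* Main.v *)
Require Import Defs.
From Stdlib Require Import Reals Lra Psatz.
From Coquelicot Require Import Coquelicot.
Open Scope R_scope.

Lemma Df_u b1 c1 m u v : Derive (fun x => model_f b1 c1 m x v) u = m - 2*b1*u - c1*v.
Proof. apply is_derive_unique. unfold model_f. auto_derive; [easy|ring]. Qed.
Lemma Df_v b1 c1 m u v : Derive (fun y => model_f b1 c1 m u y) v = - c1*u.
Proof. apply is_derive_unique. unfold model_f. auto_derive; [easy|ring]. Qed.
Lemma Dg_u a2 b2 c2 k m u v : 1 + k*u <> 0 -> Derive (fun x => model_g a2 b2 c2 k m x v) u = - (a2*k*v)/(1+k*u)^2 - c2*v.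
Proof. intro H. apply is_derive_unique. unfold model_g. auto_derive. tauto. field. auto. Qed.
Lemma Dg_v a2 b2 c2 k m u v : 1 + k*u <> 0 -> Derive (fun y => model_g a2 b2 c2 k m u y) v = a2/(1+k*u) - 2*b2*v - c2*u.
Proof. intro H. apply is_derive_unique. unfold model_g. auto_derive. tauto. field. auto. Qed.

Lemma det1_form a2 b1 b2 c1 c2 k m : b2 <> 0 ->
  jac_det (model_f b1 c1) (model_g a2 b2 c2 k) m 0 (a2/b2) = -a2*(m - c1*a2/b2).
Proof.
  intro H. unfold jac_det. rewrite Df_u, Df_v, Dg_u, Dg_v by (rewrite Rmult_0_r, Rplus_0_r; lra).
  field; repeat split; auto; rewrite Rmult_0_r, Rplus_0_r; lra.
Qed.

Lemma tr1_form a2 b1 b2 c1 c2 k m : b2 <> 0 ->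
  jac_tr (model_f b1 c1) (model_g a2 b2 c2 k) m 0 (a2/b2) = (m - c1*a2/b2) - a2.
Proof.
  intro H. unfold jac_tr. rewrite Df_u, Dg_v by (rewrite Rmult_0_r, Rplus_0_r; lra).
  field; repeat split; auto; rewrite Rmult_0_r, Rplus_0_r; lra.
Qed.

Lemma det2_form a2 b1 b2 c1 c2 k m u v : 1 + k*u <> 0 ->
  m - b1*u - c1*v = 0 -> b2*v = a2/(1+k*u) - c2*u ->
  jac_det (model_f b1 c1) (model_g a2 b2 c2 k) m u v =
  u*v*((b1*b2 - c1*c2) - c1*a2*k/((1+k*u)*(1+k*u))).
Proof.
  intros H H1 H2. unfold jac_det. rewrite Df_u, Df_v, Dg_u, Dg_v by exact H.
  replace m with (b1*u + c1*v) by lra.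
  replace (a2/(1+k*u)) with (b2*v + c2*u) by lra.
  field. exact H.
Qed.

Lemma le_div x a b : 0 < b -> x <= a / b -> x * b <= a.
Proof.
  intros Hb H. apply Rmult_le_compat_r with (r:=b) in H; [|lra].
  replace (a/b*b) with a in H by (field; lra). exact H.
Qed.

Lemma Qpos A B0 s k c1 a2 r u1 u2 :
  A = B0 + k*c1*a2 -> (s = 1 \/ s = -1) -> 0 < s*B0 -> 0 <= k -> 0 < c1 -> 0 < a2 ->
  0 < r -> r*(2*k+2) <= 1 -> r*(24*c1*a2*k^2+1) <= s*B0 ->
  Rabs u1 < r -> Rabs u2 < r ->
  0 < s*(A - c1*a2*k/((1+k*u1)*(1+k*u2))).
Proof.
  intros HA Hs HsB Hk Hc Ha Hr H1 H2 Hu1 Hu2.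
  apply Rabs_def2 in Hu1. apply Rabs_def2 in Hu2.
  assert (kr : k*r <= 1/2) by nra.
  assert (k1 : k*u1 <= k*r /\ -(k*r) <= k*u1) by (split; nra).
  assert (k2 : k*u2 <= k*r /\ -(k*r) <= k*u2) by (split; nra).
  set (P := (1+k*u1)*(1+k*u2)).
  assert (HP : 1/4 <= P) by (unfold P; nra).
  assert (HP1 : Rabs (P - 1) <= 3*k*r).
  { unfold P. apply Rabs_le. split; nra. }
  assert (Hc3 : c1*a2*k*Rabs (P-1) <= 3*c1*a2*k^2*r).
  { assert (0 <= c1*a2*k) by (apply Rmult_le_pos; nra). nra. }
  assert (HPm : - Rabs (P-1) <= P - 1) by (pose proof (Rabs_maj2 (P-1)); lra).
  assert (HPM : P - 1 <= Rabs (P-1)) by (pose proof (Rle_abs (P-1)); lra).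
  assert (HN : 0 < s*B0*P + s*c1*a2*k*(P-1)).
  { assert (h1 : s*B0*P >= s*B0/4) by nra.
    assert (h0 : 0 <= c1*a2*k) by (apply Rmult_le_pos; nra).
    assert (h2 : s*c1*a2*k*(P-1) >= - (c1*a2*k*Rabs (P-1))).
    { destruct Hs as [-> | ->]; nra. }
    lra. }
  assert (E: s*(A - c1*a2*k/P) = (s*B0*P + s*c1*a2*k*(P-1))/P).
  { rewrite HA. field. lra. }
  fold P. rewrite E.
  apply Rdiv_lt_0_compat; lra.
Qed.

Lemma branch A B0 s k E e :
  (s = 1 \/ s = -1) -> 0 < s*B0 -> 0 <= k -> 0 < E ->
  E*(2*k+2) <= s*B0 -> E*(32*Rabs A*k+1) <= B0^2 -> Rabs e < E ->
  let B := B0 - k*e in let Dl := B^2 + 4*A*k*e in let D := B + s*sqrt Dl in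
  0 < Dl /\ s*B0/2 <= s*D /\
  A*k*(2*e/D)^2 + B*(2*e/D) - e = 0 /\ Rabs (2*e/D) * (s*B0/2) <= 2*Rabs e.
Proof.
  intros Hs HsB Hk HE H1 H2 He B Dl D.
  pose proof (Rabs_def2 _ _ He) as [He1 He2].
  assert (ss : s*s = 1) by (destruct Hs as [-> | ->]; lra).
  assert (kE : k*Rabs e <= k*E) by nra.
  assert (ke : Rabs (k*e) <= k*E) by (rewrite Rabs_mult, (Rabs_pos_eq k); lra).
  assert (sB : s*B0/2 <= s*B).
  { unfold B. pose proof (Rabs_le_between (k*e) (k*E)) as [hh _]. specialize (hh ke).
    destruct Hs as [-> | ->]; lra. }
  assert (B2 : (s*B0)^2/4 <= B^2).
  { replace (B^2) with ((s*B)^2) by (replace ((s*B)^2) with (s*s*B^2) by ring; rewrite ss; ring). nra. }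
  assert (Ae : Rabs (4*A*k*e) <= 4*Rabs A*k*E).
  { rewrite !Rabs_mult, (Rabs_pos_eq 4), (Rabs_pos_eq k) by lra.
    assert (0 <= Rabs A) by apply Rabs_pos. assert (0<= Rabs e) by apply Rabs_pos. nra. }
  assert (Ae2 : - (4*A*k*e) <= 4*Rabs A*k*E) by (pose proof (Rabs_maj2 (4*A*k*e)); lra).
  assert (sB2 : (s*B0)^2 = B0^2) by (replace ((s*B0)^2) with (s*s*B0^2) by ring; rewrite ss; ring).
  assert (HD : 0 < Dl).
  { unfold Dl. assert (0 <= Rabs A) by apply Rabs_pos. nra. }
  assert (sq : 0 <= sqrt Dl) by apply sqrt_pos.
  assert (sD : s*B0/2 <= s*D).
  { unfold D. replace (s*(B + s*sqrt Dl)) with (s*B + (s*s)*sqrt Dl) by ring. rewrite ss. lra. }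
  assert (Dnz : D <> 0) by (intro Z; rewrite Z in sD; lra).
  split; [exact HD|split; [exact sD|split]].
  - assert (S2 : sqrt Dl * sqrt Dl = Dl) by (apply sqrt_sqrt; lra).
    transitivity ((4*A*k*e^2 + 2*B*e*D - e*D^2)/D^2); [field; exact Dnz|].
    replace (4*A*k*e^2 + 2*B*e*D - e*D^2) with 0; [field; exact Dnz|].
    unfold D.
    replace (4 * A * k * e ^ 2 + 2 * B * e * (B + s * sqrt Dl) - e * (B + s * sqrt Dl) ^ 2)
      with (4 * A * k * e ^ 2 + e * B^2 - e*(s*s)*(sqrt Dl * sqrt Dl)) by ring.
    rewrite ss, S2. unfold Dl. ring.
  - unfold Rdiv. rewrite Rabs_mult, Rabs_mult, Rabs_inv, (Rabs_pos_eq 2) by lra.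
    assert (RD : Rabs D = s*D).
    { destruct Hs as [-> | ->]; [rewrite Rabs_pos_eq by lra; ring | rewrite Rabs_left by lra; ring]. }
    rewrite RD.
    assert (0 <= Rabs e) by apply Rabs_pos.
    apply Rle_trans with (2*Rabs e * / (s*D) * (s*D)).
    + apply Rmult_le_compat_l; [|lra]. apply Rmult_le_pos; [lra|]. apply Rlt_le, Rinv_0_lt_compat; lra.
    + right. field. lra.
Qed.

Theorem mainTheorem13 (a2 b1 b2 c1 c2 k : R) :
  0 < a2 -> 0 < b1 -> 0 < b2 -> 0 < c1 -> 0 < c2 -> 0 <= k ->
  c1 <> b1 * b2 / (k * a2 + c2) ->
  transcritical_bifurcation (model_f b1 c1) (model_g a2 b2 c2 k)
    (c1 * a2 / b2) 0 (a2 / b2).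
Proof.
  intros Ha2 Hb1 Hb2 Hc1 Hc2 Hk Hne.
  set (A := b1*b2 - c1*c2). set (B0 := A - k*c1*a2). set (m0 := c1*a2/b2).
  assert (HB0 : B0 <> 0).
  { intro Z. apply Hne. assert (HH : c1*(k*a2+c2) = b1*b2) by (unfold B0, A in Z; lra).
    rewrite <- HH. field. nra. }
  assert (Hs0 : exists s, (s = 1 \/ s = -1) /\ 0 < s*B0).
  { destruct (Rlt_dec 0 B0).
    - exists 1. split; [left; reflexivity| lra].
    - exists (-1). split; [right; reflexivity| lra]. }
  destruct Hs0 as [s [Hs HsB]].
  assert (ss : s*s = 1) by (destruct Hs as [-> | ->]; lra).
  assert (Hb2n : b2 <> 0) by lra.
  set (r := Rmin (/(2*k+2)) (Rmin (a2/(2*b2)) (s*B0/(24*c1*a2*k^2+1)))).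
  assert (Hr : 0 < r).
  { unfold r. repeat apply Rmin_pos.
    - apply Rinv_0_lt_compat; lra.
    - apply Rdiv_lt_0_compat; lra.
    - apply Rdiv_lt_0_compat; [lra|]. assert (0 <= c1*a2*k^2) by (apply Rmult_le_pos; [nra|nra]). lra. }
  assert (Hr1 : r*(2*k+2) <= 1).
  { apply le_div; [lra|]. replace (1/(2*k+2)) with (/(2*k+2)) by (field; lra). apply Rmin_l. }
  assert (Hr2 : r*(2*b2) <= a2).
  { apply le_div; [lra|]. eapply Rle_trans; [apply Rmin_r|apply Rmin_l]. }
  assert (Hr3 : r*(24*c1*a2*k^2+1) <= s*B0).
  { assert (0 <= c1*a2*k^2) by (apply Rmult_le_pos; [nra|nra]).
    apply le_div; [lra|]. eapply Rle_trans; [apply Rmin_r|apply Rmin_r]. }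
  set (ru := r*b2/(2*a2*k + c2 + b2)).
  assert (Hru : 0 < ru) by (unfold ru; apply Rdiv_lt_0_compat; nra).
  assert (Hru1 : ru*(2*a2*k + c2 + b2) = r*b2) by (unfold ru; field; nra).
  assert (Hrur : ru <= r).
  { assert (0 <= a2*k) by nra. assert (0 <= ru*(2*a2*k+c2)) by nra.
    apply Rmult_le_reg_r with b2; [lra|]. nra. }
  set (E := Rmin (s*B0/(2*k+2)) (Rmin (B0^2/(32*Rabs A*k+1)) (ru*(s*B0)/4))).
  assert (HA0 : 0 <= Rabs A) by apply Rabs_pos.
  assert (HE : 0 < E).
  { unfold E. repeat apply Rmin_pos.
    - apply Rdiv_lt_0_compat; lra.
    - apply Rdiv_lt_0_compat; [|nra]. apply pow2_gt_0. exact HB0.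
    - apply Rdiv_lt_0_compat; nra. }
  assert (HE1 : E*(2*k+2) <= s*B0).
  { apply le_div; [lra|]. apply Rmin_l. }
  assert (HE2 : E*(32*Rabs A*k+1) <= B0^2).
  { apply le_div; [nra|]. eapply Rle_trans; [apply Rmin_r|apply Rmin_l]. }
  assert (HE3 : E*4 <= ru*(s*B0)).
  { apply le_div; [lra|]. eapply Rle_trans; [apply Rmin_r|apply Rmin_r]. }
  set (d := E/b2).
  assert (Hd : 0 < d) by (unfold d; apply Rdiv_lt_0_compat; lra).
  set (U := fun m => 2*(b2*m - c1*a2)/((B0 - k*(b2*m - c1*a2)) + s*sqrt((B0 - k*(b2*m-c1*a2))^2 + 4*A*k*(b2*m-c1*a2)))).
  set (hv := fun u => (a2/(1+k*u) - c2*u)/b2).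
  assert (nz : forall u, Rabs u < r -> 1 + k*u <> 0 /\ 1/2 <= 1 + k*u).
  { intros u Hu. apply Rabs_def2 in Hu. assert (k*r <= 1/2) by nra.
    assert (-(k*r) <= k*u) by nra. split; lra. }
  assert (KEY : forall m, Rabs (m - m0) < d ->
     Rabs (U m) < ru /\ b2*m = A*U m + c1*a2/(1+k*U m) /\ (m <> m0 -> U m <> 0) /\ ex_derive U m).
  { intros m Hm.
    set (e := b2*m - c1*a2).
    assert (Hee : e = b2*(m - m0)) by (unfold e, m0; field; lra).
    assert (He : Rabs e < E).
    { rewrite Hee, Rabs_mult, (Rabs_pos_eq b2) by lra.
      replace E with (b2*d) by (unfold d; field; lra). apply Rmult_lt_compat_l; lra. }
    pose proof (branch A B0 s k E e Hs HsB Hk HE HE1 HE2 He) as [HD [sD [Hq Hu]]].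
    cbv zeta in HD, sD, Hq, Hu.
    assert (UE : U m = 2*e/(B0-k*e + s*sqrt((B0-k*e)^2+4*A*k*e))) by reflexivity.
    rewrite <- UE in Hq, Hu.
    assert (Hae : 0 <= Rabs e) by apply Rabs_pos.
    assert (HUr : Rabs (U m) < ru).
    { destruct (Rlt_or_le (Rabs (U m)) ru) as [h|h]; [exact h|].
      exfalso. assert (ru*(s*B0/2) <= Rabs (U m)*(s*B0/2)) by (apply Rmult_le_compat_r; lra).
      lra. }
    destruct (nz (U m)) as [nz1 nz2]; [lra|].
    split; [exact HUr|split;[|split]].
    - assert (X : b2*m*(1+k*U m) - (A*U m*(1+k*U m) + c1*a2) = -(A*k*U m^2 + (B0 - k*e)*U m - e))
        by (unfold B0, e; ring).
      rewrite Hq, Ropp_0 in X.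
      replace (A*U m + c1*a2/(1+k*U m)) with ((A*U m*(1+k*U m) + c1*a2)/(1+k*U m)) by (field; exact nz1).
      replace (b2*m) with (b2*m*(1+k*U m)/(1+k*U m)) at 1 by (field; exact nz1).
      f_equal. lra.
    - intros Hmm Z. rewrite Z in Hq. assert (e = 0) by lra.
      rewrite Hee in H. apply Hmm. nra.
    - unfold U. auto_derive.
      match goal with |- context [sqrt ?X] => replace X with ((B0 - k*(b2*m - c1*a2))^2 + 4*A*k*(b2*m-c1*a2)) by ring end.
      split; [unfold e in HD; lra|]. split; [|easy].
      intro Z. assert (Z2 : B0 - k*e + s*sqrt((B0-k*e)^2+4*A*k*e) = 0) by (rewrite <- Z; unfold e; ring).
      assert (s*(B0 - k*e + s*sqrt ((B0 - k*e)^2 + 4*A*k*e)) = 0) by (rewrite Z2; ring).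
      lra. }

  assert (HA : A = B0 + k*c1*a2) by (unfold B0; ring).
  assert (QP : forall u1 u2, Rabs u1 < r -> Rabs u2 < r ->
            0 < s*(A - c1*a2*k/((1+k*u1)*(1+k*u2)))).
  { intros u1 u2 H1 H2. exact (Qpos A B0 s k c1 a2 r u1 u2 HA Hs HsB Hk Hc1 Ha2 Hr Hr1 Hr3 H1 H2). }
  assert (U0 : U m0 = 0).
  { unfold U. replace (b2*m0 - c1*a2) with 0 by (unfold m0; field; lra). unfold Rdiv. ring. }
  assert (Hv0 : hv 0 = a2/b2).
  { unfold hv. rewrite !Rmult_0_r, Rplus_0_r. field. lra. }
  assert (PhiU : forall m u, Rabs (m-m0) < d -> Rabs u < r -> b2*m = A*u + c1*a2/(1+k*u) -> u = U m).
  { intros m u Hm Hu Hphi. destruct (KEY m Hm) as [K1 [K2 _]].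
    destruct (nz u Hu) as [n1 _]. destruct (nz (U m)) as [n2 _]; [lra|].
    assert (X : (u - U m)*(A - c1*a2*k/((1+k*u)*(1+k*U m))) = 0).
    { replace ((u - U m)*(A - c1*a2*k/((1+k*u)*(1+k*U m)))) with
        ((A*u + c1*a2/(1+k*u)) - (A*U m + c1*a2/(1+k*U m))) by (field; split; auto).
      rewrite <- Hphi, <- K2. ring. }
    apply Rmult_integral in X. destruct X as [X|X]; [lra|].
    pose proof (QP u (U m) Hu ltac:(lra)). rewrite X in H. lra. }
  assert (VB : forall m, Rabs (m - m0) < d -> Rabs (hv (U m) - a2/b2) < r).
  { intros m Hm. destruct (KEY m Hm) as [K1 _]. set (u0 := U m) in *.
    destruct (nz u0) as [n1 n2]; [lra|].
    set (w := a2*k/(1+k*u0)).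
    assert (Hw : w*(1+k*u0) = a2*k) by (unfold w; field; exact n1).
    assert (Hw0 : 0 <= w) by (unfold w; apply Rmult_le_pos; [nra| apply Rlt_le, Rinv_0_lt_compat; lra]).
    assert (Hw1 : w <= 2*a2*k) by nra.
    assert (Ex : hv u0 - a2/b2 = -(u0*(w+c2))/b2) by (unfold hv, w; field; split; auto).
    rewrite Ex. unfold Rdiv. rewrite Rabs_mult, Rabs_Ropp, Rabs_inv, Rabs_mult, (Rabs_pos_eq (w+c2)), (Rabs_pos_eq b2) by lra.
    apply Rmult_lt_reg_r with b2; [lra|].
    replace (Rabs u0 * (w + c2) * / b2 * b2) with (Rabs u0 * (w+c2)) by (field; lra).
    assert (0 <= Rabs u0) by apply Rabs_pos.
    assert (Rabs u0 * (w+c2) <= Rabs u0 * (2*a2*k + c2)) by (apply Rmult_le_compat_l; lra).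
    assert (Rabs u0 * (2*a2*k + c2) < ru * (2*a2*k+c2) + ru*b2).
    { assert (0 <= a2*k) by nra. nra. }
    lra. }
  unfold transcritical_bifurcation.
  split; [unfold model_f; ring|].
  split; [unfold model_g; rewrite !Rmult_0_r, Rplus_0_r; field; lra|].
  split; [rewrite det1_form by lra; unfold m0; ring|].
  split; [rewrite tr1_form by lra; unfold m0; lra|].
  exists d, r, (fun _ : R => (0, a2/b2)), (fun m => (U m, hv (U m))).
  split; [exact Hd|]. split; [exact Hr|]. split; [reflexivity|].
  split; [rewrite U0, Hv0; reflexivity|].
  split.
  { intros m u v Hm [Hu Hv]. simpl in Hu, Hv. rewrite Rminus_0_r in Hu.
    destruct (nz u Hu) as [n1 _]. unfold has_partials, model_f, model_g.
    repeat split; auto_derive; repeat split; auto. }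
  split.
  { intros m Hm. destruct (KEY m Hm) as [K1 [K2 [K3 K4]]].
    destruct (nz (U m)) as [n1 _]; [lra|].
    split; [simpl; apply continuous_const|].
    split; [simpl; apply continuous_const|].
    split; [change (continuous U m); apply (ex_derive_continuous (K:=R_AbsRing) (V:=R_NormedModule) U); exact K4|].
    change (continuous (fun t => hv (U t)) m).
    apply (continuous_comp U hv m); [apply (ex_derive_continuous (K:=R_AbsRing) (V:=R_NormedModule) U); exact K4|].
    apply (ex_derive_continuous (K:=R_AbsRing) (V:=R_NormedModule) hv). unfold hv. auto_derive. repeat split; auto. }
  split.
  { intros m Hm. destruct (KEY m Hm) as [K1 [K2 [K3 K4]]]. pose proof (VB m Hm) as VBm.
    split.
    { unfold in_box; simpl. replace (0-0) with 0 by ring. replace (a2/b2 - a2/b2) with 0 by ring.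
      rewrite Rabs_R0. lra. }
    split.
    { unfold in_box; simpl. rewrite Rminus_0_r. lra. }
    intros u v [Hu Hv]. simpl in Hu, Hv. rewrite Rminus_0_r in Hu.
    destruct (nz u Hu) as [n1 _].
    assert (vpos : 0 < v).
    { apply Rabs_def2 in Hv. assert (a2/b2 - r >= a2/(2*b2)).
      { assert (r <= a2/(2*b2)). { apply Rmult_le_reg_r with (2*b2); [lra|].
          replace (a2/(2*b2)*(2*b2)) with a2 by (field; lra). lra. }
        replace (a2/b2) with (2*(a2/(2*b2))) by (field; lra). lra. }
      assert (0 < a2/(2*b2)) by (apply Rdiv_lt_0_compat; lra). lra. }
    split.
    - intros [F G]. unfold model_f, model_g in F, G.
      assert (F' : u*(m - b1*u - c1*v) = 0) by (rewrite <- F; ring).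
      assert (G' : v*(a2/(1+k*u) - b2*v - c2*u) = 0) by (rewrite <- G; field; exact n1).
      apply Rmult_integral in G'. destruct G' as [G'|G']; [lra|].
      apply Rmult_integral in F'. destruct F' as [F'|F'].
      + left. subst u. rewrite Rmult_0_r, Rplus_0_r in G'.
        f_equal. apply Rmult_eq_reg_l with b2; [|lra]. field_simplify; lra.
      + right.
        assert (Hphi : b2*m = A*u + c1*a2/(1+k*u)).
        { replace m with (b1*u + c1*v) by lra.
          replace (c1*a2/(1+k*u)) with (c1*(a2/(1+k*u))) by (field; exact n1).
          replace (a2/(1+k*u)) with (b2*v + c2*u) by lra. unfold A. ring. }
        pose proof (PhiU m u Hm Hu Hphi) as Eu. rewrite <- Eu. f_equal.
        unfold hv. apply Rmult_eq_reg_l with b2; [|lra].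
        replace (b2*((a2/(1+k*u) - c2*u)/b2)) with (a2/(1+k*u) - c2*u) by (field; lra). lra.
    - intros [Z|Z]; injection Z as Z1 Z2; subst u v.
      + unfold model_f, model_g. split; [ring|]. rewrite !Rmult_0_r, Rplus_0_r. field. lra.
      + destruct (nz (U m)) as [n2 _]; [lra|].
        unfold model_f, model_g. split.
        * replace (m * U m - b1 * U m ^ 2 - c1 * U m * hv (U m)) with
            (U m * (b2*m - (A*U m + c1*a2/(1+k*U m)))/b2) by (unfold hv, A; field; split; auto).
          rewrite <- K2. unfold Rdiv. ring.
        * unfold hv. field. split; auto. }
  split.
  { intros m Hm Hmm Z. destruct (KEY m Hm) as [K1 [K2 [K3 K4]]].
    injection Z as Z1 Z2. apply (K3 Hmm). auto. }
  split.
  { intros m Hm Hmm. destruct (KEY m Hm) as [K1 [K2 [K3 K4]]]. pose proof (VB m Hm) as VBm.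
    change (jac_det (model_f b1 c1) (model_g a2 b2 c2 k) m 0 (a2/b2) *
            jac_det (model_f b1 c1) (model_g a2 b2 c2 k) m (U m) (hv (U m)) < 0).
    destruct (nz (U m)) as [n1 _]; [lra|].
    rewrite det1_form by lra. fold m0.
    rewrite det2_form; [| exact n1 | | unfold hv; field; split; auto].
    2:{ replace (m - b1 * U m - c1 * hv (U m)) with ((b2*m - (A*U m + c1*a2/(1+k*U m)))/b2)
          by (unfold hv, A; field; split; auto).
        rewrite <- K2. unfold Rdiv. ring. }
    fold A.
    set (u := U m) in *. set (v := hv u) in *.
    assert (vpos : 0 < v).
    { apply Rabs_def2 in VBm. assert (a2/b2 - r >= a2/(2*b2)).
      { assert (r <= a2/(2*b2)). { apply Rmult_le_reg_r with (2*b2); [lra|].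
          replace (a2/(2*b2)*(2*b2)) with a2 by (field; lra). lra. }
        replace (a2/b2) with (2*(a2/(2*b2))) by (field; lra). lra. }
      assert (0 < a2/(2*b2)) by (apply Rdiv_lt_0_compat; lra). lra. }
    assert (r0 : Rabs 0 < r) by (rewrite Rabs_R0; lra).
    pose proof (QP u u ltac:(lra) ltac:(lra)) as Q2.
    pose proof (QP u 0 ltac:(lra) r0) as Q1.
    set (q1 := A - c1*a2*k/((1+k*u)*(1+k*0))) in *.
    set (q2 := A - c1*a2*k/((1+k*u)*(1+k*u))) in *.
    assert (Em : m - m0 = u*q1/b2).
    { apply Rmult_eq_reg_l with b2; [|lra].
      replace (b2*(m - m0)) with (b2*m - c1*a2) by (unfold m0; field; lra). rewrite K2.
      unfold q1. rewrite Rmult_0_r, Rplus_0_r, Rmult_1_r. field. split; [lra|auto]. }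
    assert (Pq : 0 < q1*q2).
    { replace (q1*q2) with ((s*q1)*(s*q2)) by (transitivity ((s*s)*(q1*q2)); [ring| rewrite ss; ring]).
      apply Rmult_lt_0_compat; lra. }
    assert (un : u <> 0) by (apply K3; exact Hmm).
    assert (uu : 0 < u*u) by (destruct (Rlt_or_le 0 u); nra).
    replace (-a2*(m-m0)*(u*v*q2)) with (-((a2/b2)*(u*u)*v*(q1*q2))) by (rewrite Em; field; lra).
    assert (0 < (a2/b2)*(u*u)*v*(q1*q2)).
    { apply Rmult_lt_0_compat; [|exact Pq]. apply Rmult_lt_0_compat; [|exact vpos]. apply Rmult_lt_0_compat; [apply Rdiv_lt_0_compat; lra| exact uu]. }
    lra. }
  { intros m m' Hm Hm'.
    change (jac_det (model_f b1 c1) (model_g a2 b2 c2 k) m 0 (a2/b2) *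
            jac_det (model_f b1 c1) (model_g a2 b2 c2 k) m' 0 (a2/b2) < 0).
    rewrite !det1_form by lra. fold m0.
    assert ((m-m0)*(m'-m0) < 0) by nra.
    replace (-a2*(m-m0)*(-a2*(m'-m0))) with ((a2*a2)*((m-m0)*(m'-m0))) by ring.
    assert (0 < a2*a2) by nra. nra. }
Qed.
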